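(* Let $(T,\eta,\mu)$ be a monad on $\mathsf{Set}$ and $(A,e)$ a $T$-algebra. Consider the partial evaluation relation $R=\{(\mu_A(\tau),(Te)(\tau)) : \tau\in TTA\}\subseteq TA\times TA$. Then $R$ is an internal relation on the free $T$-algebra $(TA,\mu_A)$, i.e. a $T$-subalgebra of the product algebra $TA\times TA$. Moreover, $R$ is the smallest internal relation on $(TA,\mu_A)$ which contains all pairs $(t,\eta_A(e(t)))$ for $t\in TA$ (i.e. which relates every formal expression to its total result).
   Context: For a $T$-algebra $B$, an internal relation on $B$ is a subset $R\subseteq B\times B$ that is a $T$-subalgebra of $B\times B$, where $B\times B$ carries the componentwise (product) $T$-algebra structure. A formal expression $t_0\in TA$ partially evaluates to $t_1\in TA$ if there is $\tau\in TTA$ with $\mu_A(\tau)=t_0$ and $(Te)(\tau)=t_1$. *)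

(* Defs.v *)
Set Implicit Arguments.

Record monad := Monad {
  T : Type -> Type;
  fmap : forall (A B : Type), (A -> B) -> T A -> T B;
  eta : forall (A : Type), A -> T A;
  mu : forall (A : Type), T (T A) -> T A;
  fmap_id : forall A (x : T A), fmap (fun a => a) x = x;
  fmap_comp : forall A B C (f : A -> B) (g : B -> C) (x : T A),
      fmap (fun a => g (f a)) x = fmap g (fmap f x);
  eta_nat : forall A B (f : A -> B) (a : A), fmap f (eta a) = eta (f a);
  mu_nat : forall A B (f : A -> B) (x : T (T A)),
      fmap f (mu x) = mu (fmap (fmap f) x);
  mu_eta_l : forall A (x : T A), mu (eta x) = x;
  mu_eta_r : forall A (x : T A), mu (fmap (@eta A) x) = x;
  mu_assoc : forall A (x : T (T (T A))), mu (mu x) = mu (fmap (@mu A) x)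
}.

Arguments fmap {m A B} _ _.
Arguments eta {m A} _.
Arguments mu {m A} _.

Definition is_algebra (M : monad) (A : Type) (e : T M A -> A) : Prop :=
  (forall a : A, e (eta a) = a) /\
  (forall x : T M (T M A), e (mu x) = e (fmap e x)).

Definition prod_alg (M : monad) (B : Type) (b : T M B -> B)
  (t : T M (B * B)) : B * B :=
  (b (fmap fst t), b (fmap snd t)).

(* An internal relation on the T-algebra (B,b): a subset R of B x B that is
   a T-subalgebra of B x B, i.e. closed under the product structure map
   applied to formal expressions T R (included into T (B x B)). *)
Definition internal_relation (M : monad) (B : Type) (b : T M B -> B)
  (R : B -> B -> Prop) : Prop :=
  forall s : T M {p : B * B | R (fst p) (snd p)},
    let q := @prod_alg M B b (fmap (@proj1_sig _ _) s) in R (fst q) (snd q).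

Definition partial_eval (M : monad) (A : Type) (e : T M A -> A)
  (t0 t1 : T M A) : Prop :=
  exists tau : T M (T M A), mu tau = t0 /\ fmap e tau = t1.

(* Main.v *)
Require Import Defs.
From Stdlib Require Import ClassicalEpsilon FunctionalExtensionality.

Theorem proposition3p3 (M : monad) (A : Type) (e : T M A -> A) :
  @is_algebra M A e ->
  @internal_relation M (T M A) (@mu M A) (@partial_eval M A e) /\
  (forall t : T M A, @partial_eval M A e t (eta (e t))) /\
  (forall S : T M A -> T M A -> Prop,
      @internal_relation M (T M A) (@mu M A) S ->
      (forall t : T M A, S t (eta (e t))) ->
      forall t0 t1, @partial_eval M A e t0 t1 -> S t0 t1).
Proof.
  intros [He1 He2]. split; [|split].
  - intros s. unfold prod_alg; cbn.
    set (P := fun p : T M A * T M A => @partial_eval M A e (fst p) (snd p)).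
    assert (W : forall x : {p : T M A * T M A | @partial_eval M A e (fst p) (snd p)},
               {tau : T M (T M A) | mu tau = fst (proj1_sig x) /\ fmap e tau = snd (proj1_sig x)}).
    { intros x. apply constructive_indefinite_description. exact (proj2_sig x). }
    exists (mu (fmap (fun x => proj1_sig (W x)) s)). split.
    + rewrite mu_assoc, <- !fmap_comp.
      f_equal. f_equal. apply functional_extensionality. intro x.
      exact (proj1 (proj2_sig (W x))).
    + rewrite mu_nat, <- !fmap_comp.
      f_equal. f_equal. apply functional_extensionality. intro x.
      exact (proj2 (proj2_sig (W x))).
  - intro t. exists (eta t). split. apply mu_eta_l. apply eta_nat.
  - intros S HS Ht t0 t1 [tau [H0 H1]]. subst.
    pose (g := fun t => exist (fun p : T M A * T M A => S (fst p) (snd p)) (t, eta (e t)) (Ht t)).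
    specialize (HS (fmap g tau)). unfold prod_alg in HS; cbn in HS.
    rewrite <- !fmap_comp in HS. cbn in HS.
    rewrite fmap_id in HS.
    rewrite (fmap_comp M e (@eta M A) tau), mu_eta_r in HS. exact HS.
Qed.
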